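(* Let $\mathcal{M} = \{0,1\}^n$ with $n$ even. Consider the following construction. $\mathsf{Gen}(w)$: let $a=[w]_1^{n/2}$ and $b=[w]_{n/2+1}^n$ (the first and second halves of $w$), viewed as elements of $\mathbb{F}_{2^{n/2}}$; select a uniformly random $i\in \mathbb{F}_{2^{n/2}}$; set $\sigma = [ia+b]_1^{v}$ and $R=[ia+b]_{v+1}^{n/2}$; output the key $R$ and the public string $P=(i,\sigma)$. $\mathsf{Rep}(w, P'=(i',\sigma'))$: with $a,b$ the halves of $w$ as before, if $\sigma'=[i'a+b]_1^{v}$ output $R'=[i'a+b]_{v+1}^{n/2}$, else output $\bot$. Setting $v = n/2 - \ell$, this construction is an $(m,\ell,0,\varepsilon)$-fuzzy extractor with post-application robustness $\delta$, for any $m,\ell,\varepsilon,\delta$ satisfying $\ell \leq m - n/2 -\log\frac{1}{\delta}$, as long as $m\geq n/2 + 2\log\frac{1}{\varepsilon}$.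
   Context: Notation: $[x]_i^j$ denotes the substring $x_i x_{i+1}\ldots x_j$; addition in $\mathbb{F}_{2^{n/2}}$ corresponds to bitwise XOR. An $(m,\ell,t,\varepsilon)$-fuzzy extractor is a pair $(\mathsf{Gen},\mathsf{Rep})$ such that $\mathsf{Gen}(w)$ outputs $R\in\{0,1\}^\ell$ and helper $P$; $\mathsf{Rep}(w',P)=R$ whenever the Hamming distance between $w$ and $w'$ is at most $t$; and for every $W$ with min-entropy ${\mathbf{H}}_\infty(W)\ge m$, the statistical distance between $(R,P)$ and $U_\ell\times P$ is at most $\varepsilon$. Post-application robustness $\delta$: for every distribution $W$ with min-entropy at least $m$ (here $w'=w$) and every (computationally unbounded) adversary $\mathcal{A}$, the probability that $\mathcal{A}$, given both $R$ and $P$ from $\mathsf{Gen}(w)$, outputs $\tilde P\ne P$ with $\mathsf{Rep}(w,\tilde P)\neq\bot$ is at most $\delta$. Logarithms are base 2. *)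

(* Defs.v *)
From HB Require Import structures.
From mathcomp Require Import all_boot all_order all_algebra.
From mathcomp Require Import reals exp.
Set Implicit Arguments.
Unset Strict Implicit.
Unset Printing Implicit Defensive.
Import Order.TTheory GRing.Theory Num.Theory.
Local Open Scope ring_scope.

Definition bitstring (n : nat) := {ffun 'I_n -> bool}.

Definition hamming n (x y : bitstring n) : nat := #|[set i | x i != y i]|.

Definition log2 {R : realType} (x : R) : R := ln x / ln 2.

Definition is_dist {R : realType} {T : finType} (p : T -> R) : Prop :=
  (forall x, 0 <= p x) /\ \sum_(x : T) p x = 1.

Definition Hinf {R : realType} {T : finType} (p : T -> R) : R :=
  - log2 (\big[Num.max/0]_(x : T) p x).

Definition SD {R : realType} {T : finType} (p q : T -> R) : R :=
  2^-1 * \sum_(x : T) `|p x - q x|.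

(** A (randomized) Gen is modelled as a deterministic function of the input
    and of a uniformly random seed s : S. *)
Section FE.
Variables (R : realType) (n l : nat) (S P : finType).
Variable gen : bitstring n -> S -> bitstring l * P.
Variable rep : bitstring n -> P -> option (bitstring l).

Definition joint_RP (W : bitstring n -> R) (rp : bitstring l * P) : R :=
  \sum_(w : bitstring n) \sum_(s : S)
     (W w / #|S|%:R) * (gen w s == rp)%:R.

Definition ideal_RP (W : bitstring n -> R) (rp : bitstring l * P) : R :=
  ((2%:R ^+ l)^-1) * \sum_(r : bitstring l) joint_RP W (r, rp.2).

Definition fuzzy_extractor (m : R) (t : nat) (eps : R) : Prop :=
  (forall (w w' : bitstring n) (s : S), (hamming w w' <= t)%N ->
      rep w' (gen w s).2 = Some (gen w s).1)
  /\ (forall W : bitstring n -> R, is_dist W -> m <= Hinf W ->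
      SD (joint_RP W) (ideal_RP W) <= eps).

(** Post-application robustness delta: every computationally unbounded
    (possibly randomized) adversary A, given (R, P), outputs P~ with
    distribution A R P; success = P~ <> P and Rep(w, P~) <> bot. *)
Definition post_app_robust (m : R) (delta : R) : Prop :=
  forall W : bitstring n -> R, is_dist W -> m <= Hinf W ->
  forall A : bitstring l -> P -> P -> R,
    (forall r p, is_dist (A r p)) ->
    \sum_(w : bitstring n) \sum_(s : S)
      (W w / #|S|%:R) *
      \sum_(p' : P) A (gen w s).1 (gen w s).2 p' *
         ((p' != (gen w s).2) && (rep w p' != None))%:R
    <= delta.
End FE.

(** The construction, with n = 2 (v + l), i.e. n/2 = v + l, v = n/2 - l. *)
Definition half1 k (w : bitstring (k + k)) : bitstring k :=
  [ffun j => w (lshift k j)].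
Definition half2 k (w : bitstring (k + k)) : bitstring k :=
  [ffun j => w (rshift k j)].
Definition sig_part v l (s : bitstring (v + l)) : bitstring v :=
  [ffun j => s (lshift l j)].
Definition key_part v l (s : bitstring (v + l)) : bitstring l :=
  [ffun j => s (rshift v j)].

Section Construction.
Variables (F : finFieldType) (v l : nat).
Variables (phi : bitstring (v + l) -> F) (psi : F -> bitstring (v + l)).

Definition gen_c (w : bitstring ((v + l) + (v + l))) (i : F)
  : bitstring l * (F * bitstring v) :=
  let s := psi (i * phi (half1 w) + phi (half2 w)) in
  (key_part s, (i, sig_part s)).

Definition rep_c (w : bitstring ((v + l) + (v + l))) (P' : F * bitstring v)
  : option (bitstring l) :=
  let s := psi (P'.1 * phi (half1 w) + phi (half2 w)) in
  if sig_part s == P'.2 then Some (key_part s) else None.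
End Construction.

(* Main.v *)
Require Import Defs.
From HB Require Import structures.
From mathcomp Require Import all_boot all_order all_algebra.
From mathcomp Require Import reals exp.
From mathcomp Require Import ring lra.
Import Order.TTheory GRing.Theory Num.Theory.
Local Open Scope ring_scope.
Set Implicit Arguments.
Unset Strict Implicit.
Lemma sum_ind_eq (R : realType) (T : finType) (a : T) (f : T -> R) :
  \sum_x (a == x)%:R * f x = f a.
Proof.
rewrite (bigD1 a) //= eqxx mul1r big1 ?addr0 // => x /negbTE.
by rewrite eq_sym => ->; rewrite mul0r.
Qed.

Lemma sum_ind_card (R : realType) (T : finType) (P : pred T) :
  \sum_x (P x)%:R = #|P|%:R :> R.
Proof.
rewrite (eq_bigr (fun x => if P x then 1 else 0)); last by move=> x _; case: (P x).
by rewrite -big_mkcond sumr_const.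
Qed.

Lemma CS (R : realType) (T : finType) (f : T -> R) :
  (\sum_x `|f x|) ^+ 2 <= #|T|%:R * \sum_x f x ^+ 2.
Proof.
set S := \sum_x `|f x|; set Q := \sum_x f x ^+ 2.
have [T0|Tpos] := posnP #|T|.
  have -> : S = 0.
    rewrite /S big1 // => x _.
    have : (0 < #|T|)%N by apply/card_gt0P; exists x.
    by rewrite T0.
  by rewrite expr0n /= mulr_ge0 // /Q sumr_ge0 // => x _; rewrite sqr_ge0.
set c : R := #|T|%:R.
have cpos : 0 < c by rewrite /c ltr0n.
set t := S / c.
have tc : t * c = S by rewrite /t mulfVK // gt_eqF.
have H : 0 <= \sum_x (`|f x| - t) ^+ 2 by rewrite sumr_ge0 // => x _; rewrite sqr_ge0.
have E : \sum_x (`|f x| - t) ^+ 2 = Q - 2 * t * S + c * t ^+ 2.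
  rewrite /Q /S (eq_bigr (fun x => f x ^+ 2 - 2 * t * `|f x| + t ^+ 2)); last first.
    by move=> x _; rewrite sqrrB real_normK ?num_real // mulr2n; ring.
  rewrite big_split /= big_split /= sumrN -mulr_sumr sumr_const /c.
  by rewrite -[t ^+ 2 *+ _]mulr_natl.
rewrite E -tc in H.
have H3 : c * t ^+ 2 <= Q.
  have e : Q - 2 * t * (t * c) + c * t ^+ 2 = Q - c * t ^+ 2 by ring.
  by rewrite e subr_ge0 in H.
rewrite -tc exprMn mulrC -[c ^+ 2]/(c * c) -mulrA; apply: ler_wpM2l; first exact: ltW.
exact: H3.
Qed.
Lemma ln_bound (R : realType) (x y : R) : 0 < y -> (0 < x -> ln x <= ln y) -> x <= y.
Proof.
move=> y0 H; have [x0|x0] := lerP x 0; first exact: le_trans x0 (ltW y0).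
by rewrite -ler_ln ?posrE // H.
Qed.

Lemma ln2_gt0 (R : realType) : 0 < ln (2 : R).
Proof. by apply: ln_gt0; rewrite ltr1n. Qed.

Lemma ext_log (R : realType) (N : nat) (M m eps : R) :
  0 < eps -> m <= - (ln M / ln 2) -> N%:R + 2 * (ln eps^-1 / ln 2) <= m ->
  2 ^+ N * M <= eps ^+ 2.
Proof.
move=> e0 h1 h2; apply: ln_bound; first by rewrite exprn_gt0.
move=> p0.
have M0 : 0 < M by rewrite -(pmulr_rgt0 _ (exprn_gt0 N (ltr0n R 2))).
have L0 := ln2_gt0 R.
rewrite lnM ?posrE ?exprn_gt0 // !lnXn // lnV ?posrE // in h2 *.
set L := ln 2 in h1 h2 L0 *; set lm := ln M in h1 *; set le := ln eps in h2 *.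
have h : N%:R <= (2 * le - lm) / L.
  have e : - (lm / L) - 2 * (- le / L) = (2 * le - lm) / L.
    by field; exact: lt0r_neq0.
  rewrite -e; lra.
rewrite ler_pdivlMr // in h.
rewrite -[L *+ N]mulr_natr -[le *+ 2]mulr_natr; lra.
Qed.

Lemma rob_log (R : realType) (N l : nat) (M m delta : R) :
  0 < delta -> m <= - (ln M / ln 2) -> l%:R <= m - N%:R - ln delta^-1 / ln 2 ->
  2 ^+ l * 2 ^+ N * M <= delta.
Proof.
move=> e0 h1 h2; rewrite -exprD; apply: ln_bound => // p0.
have M0 : 0 < M by rewrite -(pmulr_rgt0 _ (exprn_gt0 (l + N) (ltr0n R 2))).
have L0 := ln2_gt0 R.
rewrite lnV ?posrE // in h2.
rewrite lnM ?posrE ?exprn_gt0 // lnXn //.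
set L := ln 2 in h1 h2 L0 *; set lm := ln M in h1 *; set le := ln delta in h2 *.
have h : l%:R + N%:R <= (le - lm) / L.
  have e : - (lm / L) - - le / L = (le - lm) / L.
    by field; exact: lt0r_neq0.
  rewrite -e; lra.
rewrite ler_pdivlMr // in h.
rewrite -[L *+ _]mulr_natr natrD; lra.
Qed.
Lemma halves_inj k (w w' : bitstring (k + k)) :
  half1 w = half1 w' -> half2 w = half2 w' -> w = w'.
Proof.
move=> h1 h2; apply/ffunP => i; case: (splitP i) => j ej.
  have -> : i = lshift k j by apply: val_inj.
  by have := congr1 (fun f : bitstring k => f j) h1; rewrite !ffunE.
have -> : i = rshift k j by apply: val_inj.
by have := congr1 (fun f : bitstring k => f j) h2; rewrite !ffunE.
Qed.

Lemma parts_inj v l (s s' : bitstring (v + l)) :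
  sig_part s = sig_part s' -> key_part s = key_part s' -> s = s'.
Proof.
move=> h1 h2; apply/ffunP => i; case: (splitP i) => j ej.
  have -> : i = lshift l j by apply: val_inj.
  by have := congr1 (fun f : bitstring v => f j) h1; rewrite !ffunE.
have -> : i = rshift v j by apply: val_inj.
by have := congr1 (fun f : bitstring l => f j) h2; rewrite !ffunE.
Qed.

Definition hf (F : finFieldType) v l (phi : bitstring (v + l) -> F)
  (w : bitstring ((v + l) + (v + l))) (i : F) : F :=
  i * phi (half1 w) + phi (half2 w).

Lemma hf_inj2 (F : finFieldType) v l (phi : bitstring (v + l) -> F)
  (phi_inj : injective phi) w w' s1 s2 :
  s1 != s2 -> hf phi w s1 = hf phi w' s1 -> hf phi w s2 = hf phi w' s2 -> w = w'.
Proof.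
rewrite /hf => ns e1 e2.
set a := phi (half1 w) in e1 e2; set a' := phi (half1 w') in e1 e2.
set b := phi (half2 w) in e1 e2; set b' := phi (half2 w') in e1 e2.
have e : (s1 - s2) * (a - a') = 0.
  have -> : (s1 - s2) * (a - a') =
     (s1 * a + b - (s1 * a' + b')) - (s2 * a + b - (s2 * a' + b')) by ring.
  by rewrite e1 e2 !subrr.
have ea : a = a'.
  by move/eqP: e; rewrite mulf_eq0 subr_eq0 (negbTE ns) /= subr_eq0 => /eqP.
have eb : b = b' by move: e1; rewrite ea => /addrI.
by apply: halves_inj; apply: phi_inj.
Qed.

Lemma gen_eq (F : finFieldType) v l (phi : bitstring (v + l) -> F) psi
  (psi_inj : injective psi) w w' s s' :
  (gen_c phi psi w' s' == gen_c phi psi w s) = (s' == s) && (hf phi w' s' == hf phi w s).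
Proof.
rewrite /gen_c -/(hf phi w' s') -/(hf phi w s).
apply/eqP/andP.
  case=> ek es ei; split; first by apply/eqP.
  by apply/eqP; apply: psi_inj; apply: parts_inj.
by case=> /eqP -> /eqP ->.
Qed.

Lemma rep_some (F : finFieldType) v l (phi : bitstring (v + l) -> F) psi w p :
  (rep_c phi psi w p != None) = (sig_part (psi (hf phi w p.1)) == p.2).
Proof. by rewrite /rep_c /hf; case: ifP. Qed.

Lemma coll_card (F : finFieldType) v l (phi : bitstring (v + l) -> F)
  (phi_inj : injective phi) w w' :
  w' != w -> (#|[pred s | hf phi w' s == hf phi w s]| <= 1)%N.
Proof.
move=> nw; apply/card_le1_eqP => s1 s2; rewrite !inE => /eqP e1 /eqP e2.
apply/eqP; apply: contraT => ne.
by move: nw; rewrite (hf_inj2 phi_inj ne e2 e1) eqxx.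
Qed.

Lemma rob_card (F : finFieldType) v l (phi : bitstring (v + l) -> F) (psi : F -> bitstring (v + l))
  (phi_inj : injective phi) (psi_inj : injective psi) (i' s y : F) (sg : bitstring v) :
  i' != s ->
  (#|[pred w | (hf phi w s == y) && (sig_part (psi (hf phi w i')) == sg)]| <= 2 ^ l)%N.
Proof.
move=> ns.
have := @leq_card_in _ _ (fun w => key_part (psi (hf phi w i')))
  [pred w | (hf phi w s == y) && (sig_part (psi (hf phi w i')) == sg)].
rewrite card_ffun card_bool card_ord; apply.
move=> w1 w2; rewrite !inE => /andP [/eqP a1 /eqP b1] /andP [/eqP a2 /eqP b2] ek.
have e : hf phi w1 i' = hf phi w2 i'.
  by apply: psi_inj; apply: parts_inj => //; rewrite b1 b2.
by apply: (hf_inj2 phi_inj ns e); rewrite a1 a2.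
Qed.
Lemma sum_const_l (R : numDomainType) l (u : R) :
  \sum_(r : bitstring l) u = (2%:R ^+ l) * u.
Proof. by rewrite sumr_const card_ffun card_bool card_ord -[u *+ _]mulr_natl natrX. Qed.

Lemma SD_le (R : realType) n l (S P : finType) (gen : bitstring n -> S -> bitstring l * P)
  (W : bitstring n -> R) (u : R) :
  SD (joint_RP gen W) (ideal_RP gen W) <= \sum_x `|joint_RP gen W x - u|.
Proof.
set J := joint_RP gen W; set I := ideal_RP gen W.
set A := \sum_x `|J x - u|.
have c0 : 0 < (2%:R ^+ l : R) by rewrite exprn_gt0 // ltr0n.
have cardl : #|bitstring l|%:R = (2%:R ^+ l : R) by rewrite card_ffun card_bool card_ord natrX.
have pt : forall x, `|u - I x| <= (2%:R ^+ l)^-1 * \sum_r `|J (r, x.2) - u|.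
  move=> x; rewrite /I /ideal_RP -/J.
  have e : u = (2%:R ^+ l)^-1 * \sum_(r : bitstring l) u.
    by rewrite sum_const_l mulrA mulVf ?mul1r // gt_eqF.
  rewrite {1}e -mulrBr -sumrB normrM (ger0_norm (x := _^-1)); last by rewrite invr_ge0 ltW.
  apply: ler_wpM2l; first by rewrite invr_ge0 ltW.
  apply: le_trans (ler_norm_sum _ _ _) _.
  by apply: ler_sum => r _; rewrite distrC.
have B : \sum_x `|u - I x| <= A.
  apply: le_trans (ler_sum _ (fun x _ => pt x)) _.
  rewrite -(pair_bigA _ (fun r p => (2%:R ^+ l)^-1 * \sum_r0 `|J (r0, p) - u|)) /=.
  rewrite (eq_bigr (fun r => (2%:R ^+ l)^-1 * \sum_p \sum_r0 `|J (r0, p) - u|)); last first.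
    by move=> r _; rewrite mulr_sumr.
  rewrite sum_const_l mulrA mulfV ?mul1r ?gt_eqF //.
  rewrite exchange_big /A (pair_bigA _ (fun r p => `|J (r, p) - u|)) /=.
  by rewrite le_eqVlt; apply/orP; left; apply/eqP/eq_bigr => -[].
rewrite /SD.
have : \sum_x `|J x - I x| <= A + A.
  apply: le_trans (ler_sum _ (fun x _ => ler_distD u (J x) (I x))) _.
  by rewrite big_split /= lerD.
move=> h; rewrite -(ler_pM2l (ltr0n R 2)) mulrA mulfV ?mul1r ?pnatr_eq0 //.
by rewrite mulr2n mulrDl !mul1r.
Qed.

Lemma sum_joint (R : realType) n l (S P : finType) (gen : bitstring n -> S -> bitstring l * P)
  (W : bitstring n -> R) : (0 < #|S|)%N ->
  \sum_x joint_RP gen W x = \sum_w W w.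
Proof.
move=> S0; rewrite /joint_RP exchange_big; apply: eq_bigr => w _.
rewrite exchange_big /=.
rewrite (eq_bigr (fun s => W w / #|S|%:R)); last first.
  move=> s _; rewrite (eq_bigr (fun x => (gen w s == x)%:R * (W w / #|S|%:R))).
    by rewrite sum_ind_eq.
  by move=> x _; rewrite mulrC.
rewrite sumr_const -[(W w / _) *+ _]mulr_natr -mulrA mulVf ?mulr1 //.
by rewrite pnatr_eq0 -lt0n.
Qed.

Lemma sum_joint2 (R : realType) n l (S P : finType) (gen : bitstring n -> S -> bitstring l * P)
  (W : bitstring n -> R) :
  \sum_x joint_RP gen W x ^+ 2 =
  \sum_w \sum_s (W w / #|S|%:R) * joint_RP gen W (gen w s).
Proof.
set J := joint_RP gen W.
have pw : forall x, J x ^+ 2 =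
    \sum_w \sum_s (W w / #|S|%:R) * ((gen w s == x)%:R * J x).
  move=> x; rewrite expr2 {1}/J /joint_RP mulr_suml; apply: eq_bigr => w _.
  by rewrite mulr_suml; apply: eq_bigr => s _; rewrite mulrA.
rewrite (eq_bigr _ (fun x _ => pw x)) exchange_big; apply: eq_bigr => w _.
rewrite exchange_big; apply: eq_bigr => s _.
by rewrite -mulr_sumr sum_ind_eq.
Qed.

Lemma joint_gen (R : realType) (F : finFieldType) v l (phi : bitstring (v + l) -> F)
  (psi : F -> bitstring (v + l)) (psi_inj : injective psi)
  (W : bitstring ((v + l) + (v + l)) -> R) w s :
  joint_RP (gen_c phi psi) W (gen_c phi psi w s) =
  \sum_w' (W w' / #|F|%:R) * (hf phi w' s == hf phi w s)%:R.
Proof.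
rewrite /joint_RP; apply: eq_bigr => w' _.
rewrite (bigD1 s) //= big1 ?addr0; first by rewrite gen_eq // eqxx.
by move=> s' ns; rewrite gen_eq // (negbTE ns) mulr0.
Qed.

Lemma sumJ2_bound (R : realType) (F : finFieldType) v l (phi : bitstring (v + l) -> F)
  (psi : F -> bitstring (v + l)) (phi_inj : injective phi) (psi_inj : injective psi)
  (W : bitstring ((v + l) + (v + l)) -> R) :
  is_dist W ->
  \sum_x joint_RP (gen_c phi psi) W x ^+ 2 <=
  \sum_w (W w / #|F|%:R) * (#|F|%:R^-1 + W w).
Proof.
move=> [W0 W1]; set K : R := #|F|%:R.
have K0 : 0 < K by rewrite /K ltr0n; apply/card_gt0P; exists 0.
rewrite sum_joint2; apply: ler_sum => w _.
rewrite (eq_bigr (fun s => \sum_w' (W w / K) * ((W w' / K) * (hf phi w' s == hf phi w s)%:R))); last first.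
  by move=> s _; rewrite joint_gen // mulr_sumr.
rewrite exchange_big /=; under eq_bigr do rewrite -mulr_sumr.
rewrite -mulr_sumr; apply: ler_wpM2l.
  by rewrite divr_ge0 // ltW.
have cnt : forall w', \sum_(s : F) ((hf phi w' s == hf phi w s)%:R : R) <= 1 + K * (w' == w)%:R.
  move=> w'; rewrite (sum_ind_card R [pred s | hf phi w' s == hf phi w s]).
  have [->|nw] := eqVneq w' w.
    rewrite mulr1 ler_wpDl // /K ler_nat; exact: max_card.
  by rewrite mulr0 addr0 lern1 coll_card.
apply: le_trans (_ : \sum_w' (W w' / K) * (1 + K * (w' == w)%:R) <= _).
  apply: ler_sum => w' _; rewrite -mulr_sumr; apply: ler_wpM2l; last exact: cnt.
  by rewrite divr_ge0 // ltW.
rewrite le_eqVlt; apply/orP; left; apply/eqP.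
rewrite (eq_bigr (fun w' => W w' / K + (w == w')%:R * W w)); last first.
  move=> w' _; rewrite mulrDr mulr1; have [<-|nw] := eqVneq w w'.
    by rewrite mulr1 mul1r divfK // gt_eqF.
  by rewrite !(mulr0n, mulr0, mul0r).
by rewrite big_split /= sum_ind_eq -mulr_suml W1 mul1r.
Qed.

Lemma extract_sq (R : realType) (F : finFieldType) v l (phi : bitstring (v + l) -> F)
  (psi : F -> bitstring (v + l)) (phiK : cancel phi psi) (psiK : cancel psi phi)
  (W : bitstring ((v + l) + (v + l)) -> R) :
  is_dist W ->
  (\sum_x `|joint_RP (gen_c phi psi) W x - (#|F|%:R ^+ 2)^-1|) ^+ 2 <=
  #|F|%:R * \big[Num.max/0]_x W x.
Proof.
move=> Wd; have [W0 W1] := Wd.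
have phi_inj := can_inj phiK; have psi_inj := can_inj psiK.
set J := joint_RP (gen_c phi psi) W; set K : R := #|F|%:R.
set u := (K ^+ 2)^-1; set M := \big[Num.max/0]_x W x.
have F0 : (0 < #|F|)%N by apply/card_gt0P; exists 0.
have K0 : 0 < K by rewrite /K ltr0n.
have hF : #|F| = (2 ^ v * 2 ^ l)%N.
  by rewrite (bij_eq_card (Bijective psiK phiK)) card_ffun card_bool card_ord expnD.
have cardX : #|{: bitstring l * (F * bitstring v)}|%:R = K ^+ 2.
  rewrite !card_prod !card_ffun !card_bool !card_ord /K -natrX; congr (_%:R).
  by rewrite -mulnn {2}hF mulnCA mulnC [(2 ^ v * _)%N]mulnC.
have sJ : \sum_x J x = 1 by rewrite /J sum_joint.
have Wmax : forall w, W w <= M by move=> w; exact: le_bigmax.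
have sJ2 : \sum_x J x ^+ 2 <= u + M / K.
  apply: le_trans (sumJ2_bound phi_inj psi_inj Wd) _.
  apply: le_trans (_ : \sum_w W w * (u + M / K) <= _).
    apply: ler_sum => w _; rewrite -/K -mulrA; apply: ler_wpM2l; first exact: W0.
    rewrite mulrDr /u -exprVn expr2; apply: lerD => //.
    by rewrite mulrC; apply: ler_wpM2r; [rewrite invr_ge0 ltW | exact: Wmax].
  by rewrite -mulr_suml W1 mul1r.
have E : \sum_x (J x - u) ^+ 2 = \sum_x J x ^+ 2 - 2 * u * \sum_x J x +
    #|{: bitstring l * (F * bitstring v)}|%:R * u ^+ 2.
  rewrite (eq_bigr (fun x => J x ^+ 2 - 2 * u * J x + u ^+ 2)); last first.
    by move=> x _; rewrite sqrrB mulr2n; ring.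
  rewrite big_split /= big_split /= sumrN -mulr_sumr sumr_const.
  by rewrite -[u ^+ 2 *+ _]mulr_natl.
apply: le_trans (CS _) _.
rewrite -/u; rewrite E sJ cardX mulr1.
apply: le_trans (_ : K ^+ 2 * (u + M / K - 2 * u + K ^+ 2 * u ^+ 2) <= _).
  apply: ler_wpM2l; first by rewrite exprn_ge0 // ltW.
  by rewrite lerD2r lerD2r.
rewrite le_eqVlt; apply/orP; left; apply/eqP.
by rewrite /u; field; rewrite gt_eqF.
Qed.

Lemma rob_point (R : realType) (F : finFieldType) v l (phi : bitstring (v + l) -> F)
  (psi : F -> bitstring (v + l)) (phi_inj : injective phi) (psi_inj : injective psi)
  (W : bitstring ((v + l) + (v + l)) -> R) (M : R) (s y : F) (p' : F * bitstring v) :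
  (forall w, 0 <= W w) -> (forall w, W w <= M) ->
  \sum_w (hf phi w s == y)%:R *
     (W w / #|F|%:R * ((p' != (s, sig_part (psi y))) && (rep_c phi psi w p' != None))%:R)
  <= M / #|F|%:R * (2 ^+ l).
Proof.
move=> W0 Wmax; set K : R := #|F|%:R.
have K0 : 0 < K by rewrite /K ltr0n; apply/card_gt0P; exists 0.
have M0 : 0 <= M by apply: le_trans (W0 [ffun=> false]) (Wmax _).
have MK0 : 0 <= M / K by rewrite divr_ge0 // ltW.
have [eP|nP] := eqVneq p' (s, sig_part (psi y)).
  rewrite big1 => [|w _]; first by rewrite mulr_ge0 // exprn_ge0.
  by rewrite /= !(mulr0n, mulr0).
case: p' nP => i' sg nP.
have [ei|ni] := eqVneq i' s.
  rewrite big1 => [|w _]; first by rewrite mulr_ge0 // exprn_ge0.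
  rewrite rep_some /=.
  case e: (hf phi w s == y); last by rewrite mul0r.
  move/eqP: e => e; rewrite ei e.
  case: eqP => [esg|]; first by move: nP; rewrite ei esg eqxx.
  by move=> _; rewrite /= !(mulr0n, mulr0).
apply: le_trans (_ : \sum_w M / K *
   ((hf phi w s == y) && (sig_part (psi (hf phi w i')) == sg))%:R <= _).
  apply: ler_sum => w _; rewrite rep_some /=.
  case: (hf phi w s == y); case: (sig_part (psi (hf phi w i')) == sg);
    rewrite /= ?(mul1r, mulr1, mul0r, mulr0, mulr0n) //.
  by apply: ler_wpM2r; [rewrite invr_ge0 ltW | exact: Wmax].
rewrite -mulr_sumr (sum_ind_card R
  [pred w | (hf phi w s == y) && (sig_part (psi (hf phi w i')) == sg)]).
apply: ler_wpM2l => //; rewrite -natrX ler_nat; exact: rob_card.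
Qed.

Lemma rob_s (R : realType) (F : finFieldType) v l (phi : bitstring (v + l) -> F)
  (psi : F -> bitstring (v + l)) (phi_inj : injective phi) (psi_inj : injective psi)
  (W : bitstring ((v + l) + (v + l)) -> R) (M : R)
  (A : bitstring l -> F * bitstring v -> F * bitstring v -> R) (s : F) :
  (forall w, 0 <= W w) -> (forall w, W w <= M) -> (forall r p, is_dist (A r p)) ->
  \sum_w (W w / #|F|%:R) *
     \sum_p' A (gen_c phi psi w s).1 (gen_c phi psi w s).2 p' *
        ((p' != (gen_c phi psi w s).2) && (rep_c phi psi w p' != None))%:R
  <= M * 2 ^+ l.
Proof.
move=> W0 Wmax Ad; set K : R := #|F|%:R.
have K0 : 0 < K by rewrite /K ltr0n; apply/card_gt0P; exists 0.
pose G y := (key_part (psi y), (s, sig_part (psi y))).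
pose T y w := (W w / K) * \sum_p' A (G y).1 (G y).2 p' *
        ((p' != (G y).2) && (rep_c phi psi w p' != None))%:R.
rewrite (eq_bigr (fun w => \sum_y (hf phi w s == y)%:R * T y w)); last first.
  by move=> w _; rewrite sum_ind_eq.
rewrite exchange_big /=.
apply: le_trans (_ : \sum_(y : F) M / K * 2 ^+ l <= _); last first.
  rewrite sumr_const -[(M / K * _) *+ _]mulr_natr -/K mulrAC divfK //.
  by rewrite gt_eqF.
apply: ler_sum => y _.
rewrite /T.
rewrite (eq_bigr (fun w => \sum_p' A (G y).1 (G y).2 p' * ((hf phi w s == y)%:R *
   (W w / K * ((p' != (s, sig_part (psi y))) && (rep_c phi psi w p' != None))%:R)))); last first.
  move=> w _; rewrite mulr_sumr mulr_sumr; apply: eq_bigr => p' _; ring.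
rewrite exchange_big /=.
apply: le_trans (_ : \sum_p' A (G y).1 (G y).2 p' * (M / K * 2 ^+ l) <= _).
  apply: ler_sum => p' _; rewrite -mulr_sumr; apply: ler_wpM2l.
    by case: (Ad (G y).1 (G y).2) => h _; exact: h.
  exact: rob_point.
by rewrite -mulr_suml; case: (Ad (G y).1 (G y).2) => _ ->; rewrite mul1r.
Qed.

Theorem theorem1 (R : realType) (F : finFieldType) (v l : nat)
  (phi : bitstring (v + l) -> F) (psi : F -> bitstring (v + l))
  (phiK : cancel phi psi) (psiK : cancel psi phi)
  (phi_xor : forall x y : bitstring (v + l),
      phi [ffun j => addb (x j) (y j)] = phi x + phi y)
  (m eps delta : R) :
  0 < eps -> 0 < delta ->
  l%:R <= m - (v + l)%:R - log2 delta^-1 ->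
  (v + l)%:R + 2 * log2 eps^-1 <= m ->
  fuzzy_extractor (gen_c phi psi) (rep_c phi psi) m 0 eps /\
  post_app_robust (gen_c phi psi) (rep_c phi psi) m delta.
Proof.
move=> e0 d0 hl he.
have phi_inj := can_inj phiK; have psi_inj := can_inj psiK.
have F0 : (0 < #|F|)%N by apply/card_gt0P; exists 0.
have KE : #|F|%:R = (2 ^+ (v + l) : R).
  by rewrite (bij_eq_card (Bijective psiK phiK)) card_ffun card_bool card_ord natrX.
split; [split|].
- move=> w w' s; rewrite leqn0 => /eqP h0.
  have -> : w' = w.
    apply/ffunP => i; apply/eqP; rewrite eq_sym; apply: contraT => ne.
    have : i \in [set i | w i != w' i] by rewrite inE.
    by rewrite (cards0_eq h0) inE.
  by rewrite /rep_c /gen_c /= eqxx.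
- move=> W Wd hm; rewrite /Hinf /log2 in hm; rewrite /log2 in he.
  apply: le_trans (SD_le _ _ (#|F|%:R ^+ 2)^-1) _.
  have h := extract_sq phiK psiK Wd.
  have h2 := ext_log e0 hm he.
  rewrite -KE in h2.
  rewrite -(ler_pXn2r (isT : (0 < 2)%N)); first exact: le_trans h h2.
    by rewrite nnegrE; apply: sumr_ge0 => x _; exact: normr_ge0.
  by rewrite nnegrE; exact: ltW.
- move=> W Wd hm A Ad; rewrite /Hinf /log2 in hm; rewrite /log2 in hl.
  have [W0 W1] := Wd.
  have Wmax : forall w, W w <= \big[Num.max/0]_x W x by move=> w; exact: le_bigmax.
  rewrite exchange_big /=.
  apply: le_trans (ler_sum _ (fun s _ => rob_s phi_inj psi_inj s W0 Wmax Ad)) _.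
  rewrite sumr_const -[(_ * 2 ^+ l) *+ _]mulr_natr KE.
  apply: le_trans (rob_log d0 hm hl); rewrite le_eqVlt; apply/orP; left; apply/eqP.
  ring.
Qed.
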